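(* Let $n\ge 9$ and let $T^*$ be a chemical tree on $n$ vertices with maximum degree $\Delta(T^* )=4$. Let $\Phi(n)$ be the set of chemical trees $T$ on $n$ vertices having exactly one vertex of degree $4$, $n-5$ vertices of degree $2$, $4$ vertices of degree $1$ (and none of degree $3$), with $m_{1,2}(T)=m_{2,4}(T)=4$, $m_{1,4}(T)=0$ and $m_{2,2}(T)=n-9$. If $T^*\notin\Phi(n)$, then there exists $T\in\Phi(n)$ such that $SO(T)<SO(T^* )$ and $SO_{red}(T)<SO_{red}(T^* )$.
   Context: A chemical tree is a tree with maximum degree at most $4$. $d_G(u)$ is the degree of $u$ and $m_{i,j}(G)$ is the number of edges joining a vertex of degree $i$ to a vertex of degree $j$. $SO(G)=\sum_{uv\in E(G)}\sqrt{d_G(u)^2+d_G(v)^2}$ and $SO_{red}(G)=\sum_{uv\in E(G)}\sqrt{(d_G(u)-1)^2+(d_G(v)-1)^2}$. *)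

(* Defs.v *)
From mathcomp Require Import all_boot all_order all_algebra.
Set Implicit Arguments. Unset Strict Implicit. Unset Printing Implicit Defensive.
Import Order.TTheory GRing.Theory Num.Theory.
Local Open Scope ring_scope.

Definition simple_graph (n : nat) (e : rel 'I_n) : Prop :=
  symmetric e /\ irreflexive e.

Definition deg (n : nat) (e : rel 'I_n) (x : 'I_n) : nat := #|[set y | e x y]|.

Definition edges (n : nat) (e : rel 'I_n) : {set 'I_n * 'I_n} :=
  [set p : 'I_n * 'I_n | (p.1 < p.2)%N && e p.1 p.2].

Definition is_tree (n : nat) (e : rel 'I_n) : Prop :=
  simple_graph e /\ (forall x y : 'I_n, connect e x y) /\ #|edges e| = n.-1.

Definition chemical_tree (n : nat) (e : rel 'I_n) : Prop :=
  is_tree e /\ forall x : 'I_n, (deg e x <= 4)%N.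

Definition max_deg (n : nat) (e : rel 'I_n) : nat := \max_(x : 'I_n) deg e x.

Definition nverts (n : nat) (e : rel 'I_n) (i : nat) : nat :=
  #|[set x | deg e x == i]|.

Definition medges (n : nat) (e : rel 'I_n) (i j : nat) : nat :=
  #|[set p in edges e | ((deg e p.1 == i) && (deg e p.2 == j))
                      || ((deg e p.1 == j) && (deg e p.2 == i))]|.

Definition SO (R : rcfType) (n : nat) (e : rel 'I_n) : R :=
  \sum_(p in edges e) Num.sqrt ((deg e p.1)%:R ^+ 2 + (deg e p.2)%:R ^+ 2).

Definition SOred (R : rcfType) (n : nat) (e : rel 'I_n) : R :=
  \sum_(p in edges e)
     Num.sqrt (((deg e p.1)%:R - 1) ^+ 2 + ((deg e p.2)%:R - 1) ^+ 2).

Definition inPhi (n : nat) (e : rel 'I_n) : Prop :=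
  chemical_tree e /\
  [/\ nverts e 4 = 1%N, nverts e 2 = (n - 5)%N, nverts e 1 = 4%N
     & nverts e 3 = 0%N] /\
  [/\ medges e 1 2 = 4%N, medges e 2 4 = 4%N, medges e 1 4 = 0%N
     & medges e 2 2 = (n - 9)%N].

(* Main.v *)
Require Import Defs.
From mathcomp Require Import all_boot all_order all_algebra.
From mathcomp Require Import ring lra zify.
Set Implicit Arguments. Unset Strict Implicit. Unset Printing Implicit Defensive.
Import Order.TTheory GRing.Theory Num.Theory.
Local Open Scope ring_scope.

Lemma edge_sum (V : nmodType) n (e : rel 'I_n) (F : 'I_n -> 'I_n -> V) :
  symmetric e -> irreflexive e -> (forall x y, F x y = F y x) ->
  (\sum_(p in edges e) F p.1 p.2) *+ 2 = \sum_x \sum_(y | e x y) F x y.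
Proof.
move=> sym irr symF.
rewrite pair_big_dep /= [RHS](bigID (fun p : 'I_n * 'I_n => (p.1 < p.2)%N)) /= mulr2n.
congr (_ + _).
  by apply: eq_bigl => p; rewrite /edges inE andbC.
have swK : cancel (fun p : 'I_n * 'I_n => (p.2, p.1)) (fun p => (p.2, p.1)) by case.
rewrite (reindex_inj (can_inj swK)) /=.
apply: eq_big => [[a b]|[a b] _] /=; last by rewrite symF.
rewrite inE /= sym; case: (ltngtP a b) => //= Hab; rewrite ?andbF ?andbT //.
by have -> : a = b by apply: val_inj; rewrite /= Hab.
Qed.

Lemma swap_sum (V : nmodType) n (e : rel 'I_n) (F : 'I_n -> 'I_n -> V) :
  symmetric e ->
  \sum_x \sum_(y | e x y) F x y = \sum_x \sum_(y | e x y) F y x.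
Proof.
move=> sym; rewrite !pair_big_dep /=.
have swK : cancel (fun p : 'I_n * 'I_n => (p.2, p.1)) (fun p => (p.2, p.1)) by case.
rewrite (reindex_inj (can_inj swK)) /=.
by apply: eq_bigl => -[a b] /=; rewrite sym.
Qed.

Lemma sum_nbr_const (V : nmodType) n (e : rel 'I_n) (x : 'I_n) (c : V) :
  \sum_(y | e x y) c = c *+ deg e x.
Proof.
rewrite /deg -sumr_const; apply: eq_bigl => y; by rewrite inE.
Qed.

Definition Hp (R : rcfType) (w : nat -> R) (lam mu : R) (d : nat) : R :=
  d%:R * w d - lam * (d%:R - 2) - mu.
Definition slk (R : rcfType) (f : nat -> nat -> R) (w : nat -> R) (a b : nat) : R :=
  f a b - w a - w b.
Definition Idx (R : rcfType) (f : nat -> nat -> R) n (e : rel 'I_n) : R :=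
  \sum_(p in edges e) f (deg e p.1) (deg e p.2).

Lemma handshake (R : rcfType) n (e : rel 'I_n) : simple_graph e ->
  \sum_x ((deg e x)%:R : R) = (#|edges e|)%:R *+ 2.
Proof.
move=> [sym irr].
have := @edge_sum R^o n e (fun (x y : 'I_n) => (1 : R)) sym irr (fun _ _ => erefl).
rewrite sumr_const => ->; apply: eq_bigr => x _.
by rewrite sum_nbr_const.
Qed.

Lemma decomp (R : rcfType) (f : nat -> nat -> R) w lam mu n (e : rel 'I_n) :
  (0 < n)%N -> simple_graph e -> #|edges e| = n.-1 -> (forall a b, f a b = f b a) ->
  Idx f e = \sum_v Hp w lam mu (deg e v) + mu * n%:R - 2 * lam
            + \sum_(p in edges e) slk f w (deg e p.1) (deg e p.2).
Proof.
move=> n0 sg ne fsym.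
have hs := handshake R sg; rewrite ne in hs.
case: sg => sym irr.
have E1 : Idx f e = \sum_(p in edges e) (w (deg e p.1) + w (deg e p.2))
            + \sum_(p in edges e) slk f w (deg e p.1) (deg e p.2).
  rewrite -big_split /=; apply: eq_bigr => p _; rewrite /slk; ring.
have E2 : (\sum_(p in edges e) (w (deg e p.1) + w (deg e p.2))) *+ 2
     = (\sum_v (deg e v)%:R * w (deg e v)) *+ 2.
  rewrite (@edge_sum _ n e (fun x y => w (deg e x) + w (deg e y)) sym irr); last by move=> *; rewrite addrC.
  under eq_bigr do rewrite big_split /=.
  rewrite big_split /= [X in _ + X = _](swap_sum _ sym) /= -big_split /= mulr2n -big_split /=.
  apply: eq_bigr => v _; by rewrite sum_nbr_const mulr_natl.
have E3 : \sum_v (deg e v)%:R * w (deg e v) = \sum_v Hp w lam mu (deg e v) + mu * n%:R - 2 * lam.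
  have -> : \sum_v (deg e v)%:R * w (deg e v) = \sum_v (Hp w lam mu (deg e v) + lam * (deg e v)%:R - (2 * lam - mu)).
    by apply: eq_bigr => v _; rewrite /Hp; ring.
  rewrite big_split /= big_split /= -mulr_sumr sumrN sumr_const card_ord hs.
  have -> : (n.-1)%:R = (n%:R : R) - 1 by rewrite -[in RHS](prednK n0) -natr1; ring.
  rewrite mulr2n; set S := \sum_v _; rewrite -mulr_natr; ring.
rewrite E1; congr (_ + _); rewrite -E3.
move: E2; rewrite !mulr2n => E2; lra.
Qed.
Lemma bnd (R : rcfType) (c lo hi : R) : 0 <= lo -> 0 <= hi -> lo ^+ 2 <= c -> c <= hi ^+ 2 ->
  lo <= Num.sqrt c <= hi.
Proof.
move=> l0 h0 lc ch.
have c0 : 0 <= c by apply: le_trans lc; rewrite exprn_ge0.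
have := sqr_sqrtr c0; have := sqrtr_ge0 c; set s := Num.sqrt c => s0 ss.
apply/andP; split; nra.
Qed.

Definition wG (R : rcfType) (f : nat -> nat -> R) (w3 : R) (d : nat) : R :=
  match d with
  | 1 => f 1%N 2%N - f 2%N 2%N / 2
  | 2 => f 2%N 2%N / 2
  | 3 => w3
  | 4 => f 2%N 4%N - f 2%N 2%N / 2
  | _ => 0 end.
Definition muG (R : rcfType) (f : nat -> nat -> R) : R := f 2%N 2%N.
Definition lamG (R : rcfType) (f : nat -> nat -> R) : R := f 2%N 2%N - (f 1%N 2%N - f 2%N 2%N / 2).

Definition good (R : rcfType) (f : nat -> nat -> R) (w : nat -> R) (lam mu : R) : Prop :=
  (forall a b, f a b = f b a) /\
  [/\ Hp w lam mu 1 = 0 /\ Hp w lam mu 2 = 0,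
     [/\ 0 < Hp w lam mu 0, 0 < Hp w lam mu 3 & 0 < Hp w lam mu 4],
     [/\ slk f w 1 2 = 0, slk f w 2 2 = 0 & slk f w 2 4 = 0],
     (forall a b, (1 <= a <= 4)%N -> (1 <= b <= 4)%N ->
        ~~ ((a == 1) && (b == 1))%N -> ~~ ((a == 4) && (b == 4))%N -> 0 <= slk f w a b)
   & [/\ 0 < slk f w 1 4, slk f w 4 4 <= 0 & 0 < Hp w lam mu 4 + 4 * slk f w 4 4]].

Definition fSO (R : rcfType) (a b : nat) : R := Num.sqrt (a%:R ^+ 2 + b%:R ^+ 2).
Definition fSR (R : rcfType) (a b : nat) : R :=
  Num.sqrt ((a%:R - 1) ^+ 2 + (b%:R - 1) ^+ 2).


Lemma good_SO (R : rcfType) :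
  good (@fSO R) (wG (@fSO R) (19/10)) (lamG (@fSO R)) (muG (@fSO R)).
Proof.
have fs : forall a b, @fSO R a b = fSO R b a by move=> a b; rewrite /fSO addrC.
have H11 : 140/99 <= fSO R 1 1 <= 99/70 by apply: bnd; lra.
have H12 : 38/17 <= fSO R 1 2 <= 161/72 by apply: bnd; lra.
have H13 : 117/37 <= fSO R 1 3 <= 136/43 by apply: bnd; lra.
have H14 : 235/57 <= fSO R 1 4 <= 33/8 by apply: bnd; lra.
have H22 : 280/99 <= fSO R 2 2 <= 99/35 by apply: bnd; lra.
have H23 : 137/38 <= fSO R 2 3 <= 119/33 by apply: bnd; lra.
have H24 : 76/17 <= fSO R 2 4 <= 161/36 by apply: bnd; lra.
have H33 : 420/99 <= fSO R 3 3 <= 297/70 by apply: bnd; lra.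
have H34 : 5 <= fSO R 3 4 <= 5 by apply: bnd; lra.
have H44 : 560/99 <= fSO R 4 4 <= 198/35 by apply: bnd; lra.
move: H11 H12 H13 H14 H22 H23 H24 H33 H34 H44.
split => //; split.
- rewrite /Hp /wG /lamG /muG; split; lra.
- rewrite /Hp /wG /lamG /muG; split; lra.
- rewrite /slk /wG; split; lra.
- move=> a b /andP[a1 a4] /andP[b1 b4].
  case: a a1 a4 => [|[|[|[|[|a]]]]] // _ _; case: b b1 b4 => [|[|[|[|[|b]]]]] // _ _ _ _;
  rewrite /slk /wG ?(fs 2 1) ?(fs 3 1) ?(fs 4 1) ?(fs 3 2) ?(fs 4 2) ?(fs 4 3); lra.
- rewrite /slk /Hp /wG /lamG /muG; split; lra.
Qed.

Lemma good_SR (R : rcfType) :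
  good (@fSR R) (wG (@fSR R) (11/10)) (lamG (@fSR R)) (muG (@fSR R)).
Proof.
have fs : forall a b, @fSR R a b = fSR R b a by move=> a b; rewrite /fSR addrC.
have H11 : 0 <= fSR R 1 1 <= 0 by apply: bnd; lra.
have H12 : 1 <= fSR R 1 2 <= 1 by apply: bnd; lra.
have H13 : 2 <= fSR R 1 3 <= 2 by apply: bnd; lra.
have H14 : 3 <= fSR R 1 4 <= 3 by apply: bnd; lra.
have H22 : 140/99 <= fSR R 2 2 <= 99/70 by apply: bnd; lra.
have H23 : 38/17 <= fSR R 2 3 <= 161/72 by apply: bnd; lra.
have H24 : 117/37 <= fSR R 2 4 <= 136/43 by apply: bnd; lra.
have H33 : 280/99 <= fSR R 3 3 <= 99/35 by apply: bnd; lra.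
have H34 : 137/38 <= fSR R 3 4 <= 119/33 by apply: bnd; lra.
have H44 : 420/99 <= fSR R 4 4 <= 297/70 by apply: bnd; lra.
move: H11 H12 H13 H14 H22 H23 H24 H33 H34 H44.
split => //; split.
- rewrite /Hp /wG /lamG /muG; split; lra.
- rewrite /Hp /wG /lamG /muG; split; lra.
- rewrite /slk /wG; split; lra.
- move=> a b /andP[a1 a4] /andP[b1 b4].
  case: a a1 a4 => [|[|[|[|[|a]]]]] // _ _; case: b b1 b4 => [|[|[|[|[|b]]]]] // _ _ _ _;
  rewrite /slk /wG ?(fs 2 1) ?(fs 3 1) ?(fs 4 1) ?(fs 3 2) ?(fs 4 2) ?(fs 4 3); lra.
- rewrite /slk /Hp /wG /lamG /muG; split; lra.
Qed.

Lemma deg_pos n (e : rel 'I_n) y z : e y z -> (0 < deg e y)%N.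
Proof. by move=> h; apply/card_gt0P; exists z; rewrite inE. Qed.

Lemma nbr1 n (e : rel 'I_n) y z : deg e y = 1%N -> e y z -> forall u, e y u -> u = z.
Proof.
move=> /eqP/cards1P[a Ha] yz u yu.
have : z \in [set u | e y u] by rewrite inE.
have : u \in [set u | e y u] by rewrite inE.
by rewrite Ha !inE => /eqP -> /eqP ->.
Qed.

Lemma K2 n (e : rel 'I_n) : simple_graph e -> (forall x y, connect e x y) -> (2 < n)%N ->
  forall y z, e y z -> deg e y = 1%N -> deg e z = 1%N -> False.
Proof.
move=> [sym irr] conn n2 y z yz dy dz.
have ny := nbr1 dy yz.
have zy : e z y by rewrite sym.
have nz := nbr1 dz zy.
pose S := [pred u | (u == y) || (u == z)].
have cl : closed e S.
  move=> u v uv; rewrite !inE.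
  case: (eqVneq u y) uv => [->|uy] uv /=.
    by rewrite (ny v uv) eqxx orbT.
  case: (eqVneq u z) uv => [->|uz] uv /=.
    by rewrite (nz v uv) eqxx.
  apply/esym/negbTE/negP => /orP[/eqP vy|/eqP vz].
    by move: uv; rewrite sym vy => /ny /eqP; rewrite (negbTE uz).
  by move: uv; rewrite sym vz => /nz /eqP; rewrite (negbTE uy).
have all : forall c, (c == y) || (c == z).
  move=> c; have := closed_connect cl (conn y c).
  by rewrite !inE eqxx /= => <-.
have l0 : (0 < n)%N by lia. have l1 : (1 < n)%N by lia.
have allv : forall c : 'I_n, val c = val y \/ val c = val z.
  by move=> c; case/orP: (all c) => /eqP ->; [left|right].
have := allv (Ordinal l0); have := allv (Ordinal l1); have := allv (Ordinal n2).
rewrite /=; lia.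
Qed.

Lemma sum_ge2 (R : rcfType) n (F : 'I_n -> R) a b :
  (forall v, 0 <= F v) -> a != b -> F a + F b <= \sum_v F v.
Proof.
move=> F0 ab; rewrite (bigD1 a) //= (bigD1 b) 1?eq_sym //= addrA lerDl.
by apply: sumr_ge0 => v _.
Qed.

Lemma sum_ge1 (R : rcfType) n (F : 'I_n -> R) a :
  (forall v, 0 <= F v) -> F a <= \sum_v F v.
Proof.
move=> F0; rewrite (bigD1 a) //= lerDl.
by apply: sumr_ge0 => v _.
Qed.

Lemma sum_ge1e (R : rcfType) n (e : rel 'I_n) (F : 'I_n * 'I_n -> R) p :
  (forall q, q \in edges e -> 0 <= F q) -> p \in edges e -> F p <= \sum_(q in edges e) F q.
Proof.
move=> F0 pe; rewrite (bigD1 p) //= lerDl.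
by apply: sumr_ge0 => q /andP[qe _]; apply: F0.
Qed.

Lemma edge_of n (e : rel 'I_n) y z : simple_graph e -> e y z ->
  exists2 p, p \in edges e & (p = (y, z) \/ p = (z, y)).
Proof.
move=> [sym irr] yz.
have yz' : y != z by apply: contraTneq yz => ->; rewrite irr.
case: (ltngtP y z) => h.
- by exists (y, z); [rewrite inE /= h yz | left].
- by exists (z, y); [rewrite inE /= h sym yz | right].
- by move: yz'; rewrite -(inj_eq val_inj) /= h eqxx.
Qed.

Lemma sum_ind (R : rcfType) n (P : pred 'I_n) :
  \sum_v ((P v)%:R : R) = (#|P|)%:R.
Proof.
rewrite (bigID P) /= [X in _ + X]big1 ?addr0; last by move=> v /negbTE ->.
rewrite (eq_bigr (fun _ => 1)); last by move=> v ->.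
by rewrite sumr_const.
Qed.

Definition crit n (e : rel 'I_n) : Prop :=
  exists x, deg e x = 4%N /\ (forall y, y != x -> deg e y = 1%N \/ deg e y = 2%N) /\
     (forall y z, e y z -> deg e y = 1%N -> deg e z = 2%N).

Lemma slk_sym (R : rcfType) (f : nat -> nat -> R) w a b :
  (forall a b, f a b = f b a) -> slk f w a b = slk f w b a.
Proof. by move=> fs; rewrite /slk fs; ring. Qed.

Lemma crit_val (R : rcfType) (f : nat -> nat -> R) w lam mu n (e : rel 'I_n) :
  good f w lam mu -> (0 < n)%N -> chemical_tree e -> crit e ->
  Idx f e = mu * n%:R - 2 * lam + Hp w lam mu 4.
Proof.
move=> [fs [[H1 H2] [H0 H3 H4] [S12 S22 S24] Sge [S14 S44 S44b]]] n0
   [[sg [conn ne]] d4] [x [dx [oth nb]]].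
rewrite (decomp w lam mu n0 sg ne fs).
have -> : \sum_v Hp w lam mu (deg e v) = Hp w lam mu 4.
  rewrite (bigD1 x) //= dx big1 ?addr0 // => v vx; by case: (oth v vx) => ->.
have -> : \sum_(p in edges e) slk f w (deg e p.1) (deg e p.2) = 0.
  apply: big1 => -[a b]; rewrite inE /= => /andP[_ ab].
  case: sg => sym irr.
  have dc : forall v, v = x \/ deg e v = 1%N \/ deg e v = 2%N.
    by move=> v; case: (eqVneq v x) => [|vx]; [left|right; apply: oth].
  case: (eqVneq (deg e a) 1%N) => d1.
    by rewrite d1 (nb a b ab d1).
  case: (eqVneq (deg e b) 1%N) => d2.
    have ba : e b a by rewrite sym.
    by rewrite d2 (nb b a ba d2) slk_sym.
  have xx : ~ (a = x /\ b = x) by case=> ax bx; move: ab; rewrite ax bx irr.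
  have da : a = x \/ deg e a = 2%N.
    by case: (dc a) => [->|[h|h]]; [left|by rewrite h eqxx in d1|right].
  have db : b = x \/ deg e b = 2%N.
    by case: (dc b) => [->|[h|h]]; [left|by rewrite h eqxx in d2|right].
  case: da => [ax|da]; case: db => [bx|db].
  - by case: xx.
  - by rewrite ax dx db slk_sym.
  - by rewrite bx dx da.
  - by rewrite da db.
rewrite addr0; lra.
Qed.

Lemma noncrit_gt (R : rcfType) (f : nat -> nat -> R) w lam mu n (e : rel 'I_n) :
  good f w lam mu -> (2 < n)%N -> chemical_tree e -> (exists x, deg e x = 4%N) -> ~ crit e ->
  mu * n%:R - 2 * lam + Hp w lam mu 4 < Idx f e.
Proof.
move=> [fs [[H1 H2] [H0 H3 H4] [S12 S22 S24] Sge [S14 S44 S44b]]] n2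
   [[sg [conn ne]] d4] [x dx] ncrit.
have n0 : (0 < n)%N by lia.
rewrite (decomp w lam mu n0 sg ne fs).
have K := K2 sg conn n2.
case: (sg) => sym irr.
have hp0 : forall v, 0 <= Hp w lam mu (deg e v).
  move=> v; have := d4 v; case: (deg e v) => [|[|[|[|[|k]]]]] //= _; lra.
have dge1 : forall p, p \in edges e -> (0 < deg e p.1 <= 4)%N /\ (0 < deg e p.2 <= 4)%N.
  move=> [a b]; rewrite inE /= => /andP[_ ab].
  have ba : e b a by rewrite sym.
  by rewrite (deg_pos ab) (deg_pos ba) !d4.
have not11 : forall p, p \in edges e -> ~~ ((deg e p.1 == 1%N) && (deg e p.2 == 1%N)).
  move=> [a b]; rewrite inE /= => /andP[_ ab]; apply/negP => /andP[/eqP da /eqP db].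
  exact: (K a b ab da db).
have sl0 : forall p, p \in edges e -> ~~ ((deg e p.1 == 4%N) && (deg e p.2 == 4%N)) ->
    0 <= slk f w (deg e p.1) (deg e p.2).
  move=> p pe n44; have [h1 h2] := dge1 p pe; exact: Sge h1 h2 (not11 p pe) n44.
set h := Hp w lam mu 4 in H4 S44b *.
suff : h < \sum_v Hp w lam mu (deg e v) + \sum_(p in edges e) slk f w (deg e p.1) (deg e p.2).
  by move=> hh; lra.
case: (boolP [exists y, (y != x) && (deg e y == 4%N)]) => [/existsP[y /andP[yx /eqP dy]]|no4].
  pose n4 : R := (#|[pred v | deg e v == 4%N]|)%:R.
  pose M : R := \sum_(p in edges e) ((deg e p.1 == 4%N) && (deg e p.2 == 4%N))%:R.
  have A1 : h * n4 <= \sum_v Hp w lam mu (deg e v).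
    rewrite /n4 -sum_ind mulr_sumr; apply: ler_sum => v _ /=.
    case: (eqVneq (deg e v) 4%N) => [->|nv] /=; first by rewrite mulr1.
    by rewrite mulr0.
  have A2 : slk f w 4 4 * M <= \sum_(p in edges e) slk f w (deg e p.1) (deg e p.2).
    rewrite /M mulr_sumr; apply: ler_sum => p pe.
    case: (boolP ((deg e p.1 == 4%N) && (deg e p.2 == 4%N))) => [/andP[/eqP -> /eqP ->]|n44].
      by rewrite mulr1.
    by rewrite mulr0; apply: sl0.
  have A3 : M *+ 2 <= 4 * n4.
    rewrite /M (@edge_sum _ n e (fun a b => ((deg e a == 4%N) && (deg e b == 4%N))%:R) sym irr); last first.
      by move=> a b; rewrite andbC.
    rewrite /n4 -sum_ind mulr_sumr; apply: ler_sum => v _ /=.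
    case: (eqVneq (deg e v) 4%N) => [dv|_] /=.
      rewrite mulr1 (@le_trans _ _ (\sum_(u | e v u) (1 : R))) //.
        by apply: ler_sum => u _; case: (_ == _).
      by rewrite sum_nbr_const dv.
    by rewrite mulr0 big1.
  have M0 : 0 <= M by apply: sumr_ge0 => p _; apply: ler0n.
  have n42 : 2 <= n4.
    rewrite /n4 ler_nat; apply/card_gt1P; exists x, y.
    by rewrite !inE dx dy eq_sym yx.
  set s := slk f w 4 4 in S44 S44b A2.
  set SH := \sum_v _ in A1 *; set SS := \sum_(p in edges e) _ in A2 *.
  move: A3; rewrite mulr2n => A3.
  have P1 : 0 <= (- s) * (4 * n4 - (M + M)) by apply: mulr_ge0; lra.
  have P2 : 0 <= (n4 - 2) * (h + 2 * s) by apply: mulr_ge0; lra.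
  nra.
have no4' : forall y, deg e y = 4%N -> y = x.
  move=> y dy; apply/eqP; apply: contraT => yx.
  by move: no4; rewrite negb_exists => /forallP/(_ y); rewrite yx dy eqxx.
have sl0' : forall q, q \in edges e -> 0 <= slk f w (deg e q.1) (deg e q.2).
  move=> -[a b] pe; apply: sl0 => //=.
  apply/negP => /andP[/eqP da /eqP db].
  move: pe; rewrite inE /= (no4' a da) (no4' b db) irr; by rewrite andbF.
have SS0 : 0 <= \sum_(p in edges e) slk f w (deg e p.1) (deg e p.2).
  by apply: sumr_ge0 => q qe; apply: sl0'.
have SH0 : h <= \sum_v Hp w lam mu (deg e v).
  by rewrite /h -dx; apply: sum_ge1.
case: (boolP [exists y, [&& (y != x), (deg e y != 1%N) & (deg e y != 2%N)]]) =>
   [/existsP[y /and3P[yx y1 y2]]|oth].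
  have hy : 0 < Hp w lam mu (deg e y).
    have := d4 y; move: y1 y2.
    case E: (deg e y) => [|[|[|[|[|k]]]]] //= _ _ _.
  have xy : x != y by rewrite eq_sym.
  have := sum_ge2 hp0 xy.
  rewrite dx -/h; lra.
case: (boolP [exists y, exists z, [&& e y z, (deg e y == 1%N) & (deg e z != 2%N)]]) =>
   [/existsP[y /existsP[z /and3P[yz /eqP dy dz2]]]|nb].
  have zx : z = x.
    apply/eqP; apply: contraT => zx.
    move: oth; rewrite negb_exists => /forallP/(_ z).
    rewrite zx /= dz2 andbT negbK => /eqP dz.
    by case: (K y z yz dy dz).
  have [p pe hp] := edge_of sg yz.
  have sp : 0 < slk f w (deg e p.1) (deg e p.2).
    by case: hp => ->; rewrite /= dy zx dx // slk_sym.
  have := sum_ge1e (F := fun q => slk f w (deg e q.1) (deg e q.2)) sl0' pe.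
  lra.
exfalso; apply: ncrit; exists x; split => //; split.
  move=> y yx; move: oth; rewrite negb_exists => /forallP/(_ y).
  rewrite yx /= negb_and !negbK => /orP[/eqP|/eqP]; by [left|right].
move=> y z yz dy; apply/eqP; move: nb; rewrite negb_exists => /forallP/(_ y).
rewrite negb_exists => /forallP/(_ z); by rewrite yz dy eqxx /= negbK.
Qed.

Lemma sum_indT (R : rcfType) (T : finType) (P : pred T) :
  \sum_v ((P v)%:R : R) = (#|P|)%:R.
Proof.
rewrite (bigID P) /= [X in _ + X]big1 ?addr0; last by move=> v /negbTE ->.
rewrite (eq_bigr (fun _ => 1)); last by move=> v ->.
by rewrite sumr_const.
Qed.

Lemma card_set_sum (R : rcfType) n (P : pred 'I_n) :
  (#|[set v | P v]|)%:R = \sum_v ((P v)%:R : R).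
Proof.
rewrite sum_indT; congr (_%:R); by apply: eq_card => v; rewrite inE.
Qed.

Lemma card_edges_sum (R : rcfType) n (e : rel 'I_n) (c : pred ('I_n * 'I_n)) :
  (#|[set p in edges e | c p]|)%:R = \sum_(p in edges e) ((c p)%:R : R).
Proof.
rewrite big_mkcond /= (eq_bigr (fun p => ((p \in edges e) && c p)%:R)); last first.
  by move=> p _; case: (p \in edges e).
rewrite (@sum_indT R _ (fun p => (p \in edges e) && c p)); congr (_%:R).
by apply: eq_card => p; rewrite !inE -topredE /= inE.
Qed.

Lemma medges_sum (R : rcfType) n (e : rel 'I_n) i j : simple_graph e -> (i != j)%N ->
  ((medges e i j)%:R : R) =
  \sum_v \sum_(u | e v u) ((deg e v == i) && (deg e u == j))%:R.
Proof.
move=> [sym irr] ij.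
set S := \sum_v _.
suff : ((medges e i j)%:R : R) *+ 2 = S *+ 2 by rewrite !mulr2n => h; lra.
rewrite /medges card_edges_sum.
rewrite (@edge_sum _ n e (fun a b => (((deg e a == i) && (deg e b == j))
   || ((deg e a == j) && (deg e b == i)))%:R) sym irr); last first.
  by move=> a b; rewrite orbC andbC [X in _ || X]andbC.
have hsplit : forall a b : 'I_n, ((((deg e a == i) && (deg e b == j))
   || ((deg e a == j) && (deg e b == i)))%:R : R) =
   ((deg e a == i) && (deg e b == j))%:R + ((deg e b == i) && (deg e a == j))%:R.
  move=> a b; case: (eqVneq (deg e a) i) => [da|da] /=.
    by rewrite da (negbTE ij) /= orbF andbF addr0.
  by rewrite add0r andbC.
under eq_bigr do under eq_bigr do rewrite hsplit.
under eq_bigr do rewrite big_split /=.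
rewrite big_split /= (@swap_sum _ n e (fun a b => ((deg e b == i) && (deg e a == j))%:R) sym).
by rewrite mulr2n.
Qed.

Lemma medges_sum_eq (R : rcfType) n (e : rel 'I_n) i : simple_graph e ->
  ((medges e i i)%:R : R) *+ 2 =
  \sum_v \sum_(u | e v u) ((deg e v == i) && (deg e u == i))%:R.
Proof.
move=> [sym irr].
rewrite /medges card_edges_sum (eq_bigr (fun p => ((deg e p.1 == i) && (deg e p.2 == i))%:R)); last first.
  by move=> p _; rewrite orbb.
rewrite (@edge_sum _ n e (fun a b => ((deg e a == i) && (deg e b == i))%:R) sym irr); last first.
  by move=> a b; rewrite andbC.
by [].
Qed.

Lemma crit_inPhi (R : rcfType) n (e : rel 'I_n) :
  (9 <= n)%N -> chemical_tree e -> crit e -> inPhi e.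
Proof.
move=> n9 ct [x [dx [oth nb]]].
have ct' := ct; move: ct' => [[sg [conn ne]] d4].
have sg' := sg; case: sg' => sym irr.
have dc : forall v, v = x \/ deg e v = 1%N \/ deg e v = 2%N.
  by move=> v; case: (eqVneq v x) => [|vx]; [left|right; apply: oth].
have dc' : forall v, v != x -> deg e v = 1%N \/ deg e v = 2%N by [].
have nbx : forall u, e x u -> deg e u = 2%N.
  move=> u xu; have ux : u != x by apply: contraTneq xu => ->; rewrite irr.
  case: (oth u ux) => // du; have := nb u x; rewrite sym => /(_ xu du).
  by rewrite dx.
have d4x : forall v, (deg e v == 4%N) = (v == x).
  move=> v; case: (eqVneq v x) => [->|vx]; first by rewrite dx eqxx.
  by case: (oth v vx) => ->.
pose N1 : R := (#|[set v | deg e v == 1%N]|)%:R.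
pose N2 : R := (#|[set v | deg e v == 2%N]|)%:R.
have hs := handshake R sg; rewrite ne in hs.
have n0 : (0 < n)%N by lia.
have Ex : \sum_v (((v == x) : bool)%:R : R) = 1.
  by rewrite sum_indT card1.
have E1 : \sum_v ((((v == x) : bool)%:R : R) + ((deg e v == 1%N) : bool)%:R
                   + ((deg e v == 2%N) : bool)%:R) = n%:R.
  rewrite -[n in RHS]card_ord -sumr_const; apply: eq_bigr => v _.
  case: (dc v) => [->|[h|h]]; rewrite ?dx ?h ?eqxx /=.
  - by rewrite addr0 addr0.
  - have vx : v != x by apply/eqP => vx; move: h; rewrite vx dx.
    by rewrite (negbTE vx) add0r addr0.
  - have vx : v != x by apply/eqP => vx; move: h; rewrite vx dx.
    by rewrite (negbTE vx) add0r add0r.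
rewrite !big_split /= Ex -!card_set_sum -/N1 -/N2 in E1.
have E2 : \sum_v (4 * (((v == x) : bool)%:R : R) + ((deg e v == 1%N) : bool)%:R
                   + 2 * ((deg e v == 2%N) : bool)%:R) = ((n.-1)%:R : R) *+ 2.
  rewrite -hs; apply: eq_bigr => v _.
  case: (dc v) => [->|[h|h]]; rewrite ?dx ?h ?eqxx /=.
  - by rewrite !mulr1 !mulr0 !addr0.
  - have vx : v != x by apply/eqP => vx; move: h; rewrite vx dx.
    by rewrite (negbTE vx) !mulr0 add0r addr0.
  - have vx : v != x by apply/eqP => vx; move: h; rewrite vx dx.
    by rewrite (negbTE vx) !mulr0 add0r add0r mulr1.
rewrite !big_split /= -!mulr_sumr Ex -!card_set_sum -/N1 -/N2 in E2.
have npred : ((n.-1)%:R : R) = n%:R - 1 by rewrite -[in RHS](prednK n0) -natr1; ring.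
rewrite npred mulr2n in E2.
have N1v : N1 = 4 by lra.
have N2v : N2 = n%:R - 5 by lra.
have S12 : \sum_v \sum_(u | e v u) (((deg e v == 1%N) && (deg e u == 2%N))%:R : R) = 4.
  rewrite -N1v /N1 card_set_sum; apply: eq_bigr => v _.
  case: (eqVneq (deg e v) 1%N) => [dv|dv] /=; last by rewrite big1.
  rewrite (eq_bigr (fun _ => 1)) ?sum_nbr_const ?dv //.
  by move=> u vu; rewrite (nb v u vu dv) eqxx.
have S14 : \sum_v \sum_(u | e v u) (((deg e v == 1%N) && (deg e u == 4%N))%:R : R) = 0.
  apply: big1 => v _; apply: big1 => u vu.
  case: (eqVneq (deg e v) 1%N) => [dv|dv] //=.
  by rewrite (nb v u vu dv).
have S42 : \sum_v \sum_(u | e v u) (((deg e v == 4%N) && (deg e u == 2%N))%:R : R) = 4.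
  rewrite (bigD1 x) //= [X in _ + X]big1 ?addr0; last first.
    by move=> v vx; apply: big1 => u _; rewrite d4x (negbTE vx).
  rewrite (eq_bigr (fun _ => 1)) ?sum_nbr_const ?dx //.
  by move=> u xu; rewrite ?dx (nbx u xu) ?eqxx.
have S21 : \sum_v \sum_(u | e v u) (((deg e v == 2%N) && (deg e u == 1%N))%:R : R) = 4.
  rewrite (@swap_sum _ n e (fun a b => ((deg e a == 2%N) && (deg e b == 1%N))%:R) sym) -S12.
  by apply: eq_bigr => v _; apply: eq_bigr => u _; rewrite andbC.
have S24 : \sum_v \sum_(u | e v u) (((deg e v == 2%N) && (deg e u == 4%N))%:R : R) = 4.
  rewrite (@swap_sum _ n e (fun a b => ((deg e a == 2%N) && (deg e b == 4%N))%:R) sym) -S42.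
  by apply: eq_bigr => v _; apply: eq_bigr => u _; rewrite andbC.
have S2 : \sum_v \sum_(u | e v u) (((deg e v == 2%N) : bool)%:R : R) = 2 * N2.
  rewrite /N2 card_set_sum mulr_sumr; apply: eq_bigr => v _.
  rewrite sum_nbr_const; case: (eqVneq (deg e v) 2%N) => [dv|dv] /=.
    by rewrite dv mulr1.
  by rewrite mulr0 mul0rn.
have S22' : \sum_v \sum_(u | e v u) (((deg e v == 2%N) && (deg e u == 2%N))%:R : R)
    = \sum_v \sum_(u | e v u) (((deg e v == 2%N) : bool)%:R : R)
      - \sum_v \sum_(u | e v u) (((deg e v == 2%N) && (deg e u == 1%N))%:R : R)
      - \sum_v \sum_(u | e v u) (((deg e v == 2%N) && (deg e u == 4%N))%:R : R).
  rewrite -!sumrB; apply: eq_bigr => v _; rewrite -!sumrB.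
  apply: eq_bigr => u vu.
  case: (eqVneq (deg e v) 2%N) => [dv|dv] /=; last by rewrite !subr0.
  case: (dc u) => [->|[h|h]]; rewrite ?dx ?h /=.
  - by rewrite subr0 subrr.
  - by rewrite subr0 subrr.
  - by rewrite !subr0.
have S22 : \sum_v \sum_(u | e v u) (((deg e v == 2%N) && (deg e u == 2%N))%:R : R)
    = 2 * N2 - 4 - 4 by rewrite S22' S2 S21 S24.
have natE : forall (a b : nat), (a%:R : R) = b%:R -> a = b.
  by move=> a b /eqP; rewrite eqr_nat => /eqP.
split => //; split; split.
- rewrite /nverts (_ : [set v | deg e v == 4%N] = [set x]) ?cards1 //.
  by apply/setP => v; rewrite !inE d4x.
- apply: natE; rewrite -/N2 N2v natrB //; lia.
- by apply: natE; rewrite -/N1 N1v.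
- rewrite /nverts (_ : [set v | deg e v == 3%N] = set0) ?cards0 //.
  apply/setP => v; rewrite !inE; case: (dc v) => [->|[->|->]] //; by rewrite dx.
- by apply: natE; rewrite medges_sum // S12.
- apply: natE; rewrite medges_sum // S24 //.
- by apply: natE; rewrite medges_sum // S14.
- apply: natE; have := medges_sum_eq R 2 sg; rewrite S22 N2v natrB; last by lia.
  rewrite mulr2n => h; lra.
Qed.

Local Close Scope ring_scope.

Lemma card_cnt n (P : pred nat) : #|[set y : 'I_n | P (val y)]| = count P (iota 0 n).
Proof.
have -> : #|[set y : 'I_n | P (val y)]| = #|[pred y : 'I_n | P (val y)]|.
  by apply: eq_card => y; rewrite inE.
rewrite -val_enum_ord count_map cardE /enum_mem size_filter.
by rewrite (@eq_filter _ _ predT) ?filter_predT.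
Qed.

Lemma cnt2 n k1 k2 : k1 != k2 ->
  count (fun b => (b == k1) || (b == k2)) (iota 0 n) = ((k1 < n) + (k2 < n))%N.
Proof.
move=> k12; elim: n => [|n IH] //.
rewrite -addn1 iotaD count_cat IH /= addn0.
move: k12; case: (ltngtP k1 n); case: (ltngtP k2 n); lia.
Qed.

Lemma cnt_int n m k :
  count (fun b => (m <= b)%N && (b < k)%N) (iota 0 n) = (minn n k - m)%N.
Proof.
elim: n => [|n IH]; first by rewrite /= min0n sub0n.
rewrite -addn1 iotaD count_cat IH /= addn0; lia.
Qed.

Definition Pn (a b : nat) : bool :=
  (((a == 0) && (0 < b <= 4)) || ((b == 0) && (0 < a <= 4)) ||
  ((0 < a) && (0 < b) && ((a + 4 == b) || (b + 4 == a))))%N.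

Definition Tr n : rel 'I_n := fun x y => Pn (val x) (val y).
Arguments Tr n : clear implicits.

Definition dn (a : nat) : nat := if (a <= 4)%N then 0 else a - 4.

Lemma Pn_pos a b : (0 < a)%N -> Pn a b = (b == dn a) || (b == a + 4)%N.
Proof. move=> a0; rewrite /Pn /dn; case: ifP => h; apply/idP/idP; lia. Qed.

Lemma Pn_0 b : Pn 0 b = (0 < b <= 4)%N.
Proof. rewrite /Pn; apply/idP/idP; lia. Qed.

Lemma degTr n (x : 'I_n) : deg (Tr n) x = count (Pn (val x)) (iota 0 n).
Proof.
rewrite /deg -card_cnt; apply: eq_card => y; by rewrite !inE.
Qed.

Lemma degT0 n (x : 'I_n) : (4 < n)%N -> val x = 0%N -> deg (Tr n) x = 4%N.
Proof.
move=> n4 x0; rewrite degTr x0 (eq_count Pn_0).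
rewrite -(subnKC n4) iotaD count_cat /=.
rewrite (@eq_in_count _ _ pred0) ?count_pred0 //.
by move=> b; rewrite mem_iota => /andP[h1 h2] /=; lia.
Qed.

Lemma degTp n (x : 'I_n) : (0 < val x)%N -> deg (Tr n) x = (1 + (val x + 4 < n))%N.
Proof.
move=> x0; rewrite degTr (eq_count (@Pn_pos _ ^~ x0)) cnt2; last by rewrite /dn; case: ifP => _; lia.
have xn : (val x < n)%N by exact: ltn_ord.
have : (dn (val x) < n)%N by rewrite /dn; case: ifP => _; lia.
by move=> ->.
Qed.

Lemma Tr_simple n : simple_graph (Tr n).
Proof.
split.
- by move=> x y; rewrite /Tr /Pn; apply/idP/idP; lia.
- by move=> x; rewrite /Tr /Pn; apply/negP; lia.
Qed.

Lemma Tr_conn n : forall x y : 'I_n, connect (Tr n) x y.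
Proof.
case: n => [[]//|n].
have sym := (Tr_simple n.+1).1.
pose x0 : 'I_n.+1 := ord0.
suff H : forall k (x : 'I_n.+1), (val x <= k)%N -> connect (Tr n.+1) x x0.
  move=> x y; apply: connect_trans (H _ x (leqnn _)) _.
  by rewrite (sym_connect_sym sym) (H (val y)) ?leqnn.
elim=> [|k IH] x xk.
  by have -> : x = x0 by apply: val_inj; apply/eqP; rewrite /= -leqn0.
case: (leqP (val x) k) => [xk'|xk']; first exact: IH.
have xv : val x = k.+1 by lia.
case: (leqP (val x) 4) => x4.
  apply: connect1; rewrite /Tr /Pn /=; move: xv x4; change (\val x) with (nat_of_ord x); lia.
have yl : (val x - 4 < n.+1)%N by move: (ltn_ord x); change (\val x) with (nat_of_ord x); lia.
pose y : 'I_n.+1 := Ordinal yl.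
apply: connect_trans (connect1 (_ : Tr n.+1 x y)) (IH y _).
  rewrite /Tr /Pn /=; move: x4; change (\val x) with (nat_of_ord x); lia.
rewrite /=; move: xv; change (\val x) with (nat_of_ord x); lia.
Qed.

Lemma Tr_chem n : (9 <= n)%N -> forall x : 'I_n, (deg (Tr n) x <= 4)%N.
Proof.
move=> n9 x; case: (posnP (val x)) => x0.
  by rewrite degT0 //; lia.
by rewrite degTp //; case: (_ < _)%N.
Qed.

Lemma Tr_crit n (n9 : (9 <= n)%N) : crit (Tr n).
Proof.
have n0 : (0 < n)%N by lia.
pose x0 : 'I_n := Ordinal n0.
exists x0; split; first by rewrite degT0 //; lia.
split.
  move=> y yx; have y0 : (0 < val y)%N.
    rewrite lt0n; apply: contra yx => /eqP y0; apply/eqP/val_inj; exact: y0.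
  by rewrite degTp //; case: (_ < _)%N; [right|left].
move=> y z yz dy.
have y0 : (0 < val y)%N.
  rewrite lt0n; apply/negP => /eqP y0; move: dy; rewrite degT0 //; lia.
move: dy; rewrite degTp // => dy.
have yn : (n <= val y + 4)%N by move: dy; case: ltnP.
move: yz; rewrite /Tr Pn_pos // /dn.
have zn : (val z < n)%N by exact: ltn_ord.
have yn' : (val y < n)%N by exact: ltn_ord.
have -> : (val y <= 4)%N = false by apply/negbTE; lia.
move=> /orP[/eqP zv|/eqP zv]; last by lia.
rewrite degTp; last by lia.
by rewrite zv (_ : val y - 4 + 4 = val y)%N ?yn' //; lia.
Qed.

Local Open Scope ring_scope.

Lemma Tr_edges (R : rcfType) n : (9 <= n)%N -> #|edges (Tr n)| = n.-1.
Proof.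
move=> n9.
have n0 : (0 < n)%N by lia.
pose x0 : 'I_n := Ordinal n0.
have hs := handshake R (Tr_simple n).
have E : \sum_v ((deg (Tr n) v)%:R : R) =
   \sum_v (4 * (((v == x0) : bool)%:R) + ((v != x0) : bool)%:R
           + (((0 < val v) && (val v + 4 < n))%N : bool)%:R).
  apply: eq_bigr => v _.
  case: (eqVneq v x0) => [->|vx] /=.
    by rewrite degT0 //= ?mulr1 ?addr0 //; lia.
  have v0 : (0 < val v)%N.
    rewrite lt0n; apply: contra vx => /eqP y0; apply/eqP/val_inj; exact: y0.
  by rewrite degTp // v0 /= mulr0 add0r natrD.
rewrite E !big_split /= -mulr_sumr !sum_indT card1 cardC1 card_ord in hs.
have C : #|(fun v : 'I_n => (0 < v)%N && (v + 4 < n)%N)| = (n - 5)%N.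
  transitivity (#|[set y : 'I_n | (fun b => (0 < b)%N && (b + 4 < n)%N) (val y)]|).
    by apply: eq_card => y; rewrite inE.
  rewrite (card_cnt n (fun b => (0 < b)%N && (b + 4 < n)%N)).
  transitivity (minn n (n - 4) - 1)%N; last by rewrite /minn; case: ifP => h; lia.
  rewrite -(cnt_int n 1 (n - 4)).
  by apply: eq_count => b /=; apply/idP/idP; lia.
rewrite C in hs.
have npred : ((n.-1)%:R : R) = n%:R - 1 by rewrite -[in RHS](prednK n0) -natr1; ring.
have n5 : ((n - 5)%N%:R : R) = n%:R - 5 by rewrite natrB //; lia.
rewrite npred n5 mulr2n in hs.
apply/eqP; rewrite -(eqr_nat R) npred; apply/eqP; lra.
Qed.

Lemma exists_deg4 n (e : rel 'I_n) : max_deg e = 4%N -> exists x, deg e x = 4%N.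
Proof.
move=> md; case: (boolP [exists x, deg e x == 4%N]) => [/existsP[x /eqP dx]|no].
  by exists x.
exfalso.
have : (max_deg e <= 3)%N.
  apply/bigmax_leqP => x _.
  have : (deg e x <= 4)%N by rewrite -md; apply: (leq_bigmax x).
  move: no; rewrite negb_exists => /forallP/(_ x) /negP h1 h2.
  by rewrite leq_eqVlt ltnS in h2; case/orP: h2 => // /eqP h; case: h1; rewrite h.
by rewrite md.
Qed.

Lemma SO_Idx (R : rcfType) n (e : rel 'I_n) : SO R e = Idx (@fSO R) e.
Proof. reflexivity. Qed.
Lemma SR_Idx (R : rcfType) n (e : rel 'I_n) : SOred R e = Idx (@fSR R) e.
Proof. reflexivity. Qed.

Theorem theorem3p1 (R : rcfType) (n : nat) (Tstar : rel 'I_n) :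
  (9 <= n)%N ->
  chemical_tree Tstar ->
  max_deg Tstar = 4%N ->
  ~ inPhi Tstar ->
  exists T : rel 'I_n,
    inPhi T /\ SO R T < SO R Tstar /\ SOred R T < SOred R Tstar.
Proof.
move=> n9 ct md nphi.
have [x dx] := exists_deg4 md.
have nc : ~ crit Tstar := fun c => nphi (crit_inPhi R n9 ct c).
have n0 : (0 < n)%N by lia.
have n2 : (2 < n)%N by lia.
have ctT : chemical_tree (Tr n).
  split; last exact: Tr_chem.
  split; first exact: Tr_simple.
  split; first exact: Tr_conn.
  exact: Tr_edges R n n9.
have crT := Tr_crit n9.
exists (Tr n); split; first by apply: (crit_inPhi R n9 ctT).
split.
- rewrite !SO_Idx.
  rewrite (crit_val (good_SO R) n0 ctT crT).
  exact: noncrit_gt (good_SO R) n2 ct (ex_intro _ x dx) nc.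
- rewrite !SR_Idx.
  rewrite (crit_val (good_SR R) n0 ctT crT).
  exact: noncrit_gt (good_SR R) n2 ct (ex_intro _ x dx) nc.
Qed.
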